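(* There is a decreasing sequence $\kappa_m\ge\kappa^*:=\kappa^*(e_0)>0$ such that for every $m>j\ge3$, $$\rho_{k_j}<\sigma_m(\rho_{k_j})-\rho_{k_j}\kappa_m.$$ In particular, $\rho_{k_j}<\sigma_\infty(\rho_{k_j})-\rho_{k_j}\kappa^*$.
   Context: Ellipse with semi-axes $0<b\le a$, eccentricity $e_0=\sqrt{1-b^2/a^2}$ with $0<e_0<1$. For $0\le k<1$, $F(\varphi;k)=\int_0^\varphi(1-k^2\sin^2\tau)^{-1/2}d\tau$, $K(k)=F(\pi/2;k)$. For $\lambda\in(0,b)$, $k_\lambda=\sqrt{(a^2-b^2)/(a^2-\lambda^2)}$, $\omega_\lambda=F(\arcsin(\lambda/b);k_\lambda)/(2K(k_\lambda))$ (strictly increasing from $0$ to $1/2$); for $q\ge3$, $\omega_{\lambda_q}=1/q$ and $k_q=k_{\lambda_q}\in(e_0,1)$, strictly decreasing in $q$ with $k_q\to e_0$. $\rho_{k}=\mathrm{arcosh}(1/k)$. For $m>j\ge3$, $\sigma_m(\rho_{k_j})=\frac{2\pi}{4K(k_m)}\int_0^{\rho_{k_j}}\frac{dt}{\sqrt{1-k_m^2\cosh^2t}}$, and $\sigma_\infty(\rho_{k_j})=\frac{2\pi}{4K(e_0)}\int_0^{\rho_{k_j}}\frac{dt}{\sqrt{1-e_0^2\cosh^2t}}$. *)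

(* Defs.v *)
From Stdlib Require Import Reals.
From Coquelicot Require Import Coquelicot.
Open Scope R_scope.

Definition ellF (phi k : R) : R :=
  RInt (fun tau => / sqrt (1 - k ^ 2 * (sin tau) ^ 2)) 0 phi.

Definition ellK (k : R) : R := ellF (PI / 2) k.

Definition ecc (a b : R) : R := sqrt (1 - b ^ 2 / a ^ 2).

Definition k_lam (a b lam : R) : R := sqrt ((a ^ 2 - b ^ 2) / (a ^ 2 - lam ^ 2)).

Definition omega (a b lam : R) : R :=
  ellF (asin (lam / b)) (k_lam a b lam) / (2 * ellK (k_lam a b lam)).

Definition is_lambda_q (a b : R) (q : nat) (lam : R) : Prop :=
  0 < lam < b /\ omega a b lam = / INR q.

Definition arcosh (x : R) : R := ln (x + sqrt (x ^ 2 - 1)).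

Definition rho (k : R) : R := arcosh (/ k).

(* sigma with modulus kk: (2 pi / (4 K(kk))) int_0^r dt / sqrt(1 - kk^2 cosh^2 t).
   sigma_m uses kk = k_m, sigma_infinity uses kk = e0. *)
Definition sigma_k (kk r : R) : R :=
  2 * PI / (4 * ellK kk) * RInt (fun t => / sqrt (1 - kk ^ 2 * (cosh t) ^ 2)) 0 r.

(* Main.v *)
Require Import Defs.
From Stdlib Require Import Reals Lra Psatz.
From Coquelicot Require Import Coquelicot.
Open Scope R_scope.

Definition wk (k t : R) : R := / sqrt (1 - k ^ 2 * (sin t) ^ 2).

Lemma sin2_le1 t : sin t ^ 2 <= 1.
Proof. pose proof (sin2 t). pose proof (cos2 t). pose proof (pow2_ge_0 (cos t)). unfold Rsqr in *. simpl. nra. Qed.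

Lemma wk_den_pos k t : k ^ 2 < 1 -> 0 < 1 - k ^ 2 * sin t ^ 2.
Proof. intros H. pose proof (sin2_le1 t). pose proof (pow2_ge_0 (sin t)). pose proof (pow2_ge_0 k). nra. Qed.

Lemma wk_ge1 k t : k ^ 2 < 1 -> 1 <= wk k t.
Proof.
  intros H. unfold wk. pose proof (wk_den_pos k t H).
  assert (1 - k ^ 2 * sin t ^ 2 <= 1) by (pose proof (pow2_ge_0 (sin t)); pose proof (pow2_ge_0 k); nra).
  assert (sqrt (1 - k ^ 2 * sin t ^ 2) <= 1) by (apply Rle_trans with (sqrt 1); [apply sqrt_le_1_alt; lra | rewrite sqrt_1; lra]).
  assert (0 < sqrt (1 - k ^ 2 * sin t ^ 2)) by (apply sqrt_lt_R0; lra).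
  apply Rle_trans with (/1); [rewrite Rinv_1; lra | apply Rinv_le_contravar; lra].
Qed.

Lemma wk_pos k t : k ^ 2 < 1 -> 0 < wk k t.
Proof. intros H. pose proof (wk_ge1 k t H). lra. Qed.

Lemma wk_cont k t : k ^ 2 < 1 -> continuous (wk k) t.
Proof.
  intros H. apply (ex_derive_continuous (V:=R_NormedModule)). unfold wk. pose proof (wk_den_pos k t H).
  auto_derive. split; [lra|]. split; [|auto].
  apply Rgt_not_eq. apply Rlt_gt. apply sqrt_lt_R0. lra.
Qed.

Lemma wk_int k a b : k ^ 2 < 1 -> ex_RInt (wk k) a b.
Proof. intros H. apply (ex_RInt_continuous (V:=R_CompleteNormedModule)). intros; apply wk_cont; auto. Qed.

Lemma ellF_wk phi k : ellF phi k = RInt (wk k) 0 phi.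
Proof. reflexivity. Qed.

Lemma RInt_scal_R (f : R -> R) a b c : ex_RInt f a b -> RInt (fun x => c * f x) a b = c * RInt f a b.
Proof. intros H. exact (RInt_scal f a b c H). Qed.

Lemma Chasles_R (f : R -> R) a b c : ex_RInt f a b -> ex_RInt f b c -> RInt f a b + RInt f b c = RInt f a c.
Proof. intros H1 H2. exact (RInt_Chasles f a b c H1 H2). Qed.

Lemma ellF_nonneg phi k : k ^ 2 < 1 -> 0 <= phi -> 0 <= ellF phi k.
Proof.
  intros H Hp. rewrite ellF_wk. apply RInt_ge_0; auto. apply wk_int; auto.
  intros. left. apply wk_pos; auto.
Qed.

Lemma ellF_mono x y k : k ^ 2 < 1 -> 0 <= x <= y -> ellF x k <= ellF y k.
Proof.
  intros H [H1 H2]. rewrite !ellF_wk. rewrite <- (Chasles_R (wk k) 0 x y) by (apply wk_int; auto).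
  assert (0 <= RInt (wk k) x y). { apply RInt_ge_0; auto. apply wk_int; auto. intros; left; apply wk_pos; auto. }
  lra.
Qed.

Lemma ellK_ge k : k ^ 2 < 1 -> PI / 2 <= ellK k.
Proof.
  intros H. unfold ellK. rewrite ellF_wk.
  assert (RInt (fun _ => 1) 0 (PI/2) = PI/2).
  { rewrite RInt_const. unfold scal; simpl. unfold mult; simpl. lra. }
  apply Rle_trans with (RInt (fun _ => 1) 0 (PI/2)); [lra|]. apply RInt_le. pose proof PI_RGT_0; lra.
  apply ex_RInt_const. apply wk_int; auto. intros; apply wk_ge1; auto.
Qed.

Lemma ex_RInt_scal_R (f : R -> R) a b c : ex_RInt f a b -> ex_RInt (fun x => c * f x) a b.
Proof. intros H. exact (ex_RInt_scal f a b c H). Qed.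

Lemma ratio_pt k1 k2 x y: k1^2 <= k2^2 -> k2^2 < 1 -> 0 <= x <= y -> y <= 1 ->
  / sqrt (1 - k2^2 * x) * / sqrt (1 - k1^2 * y) <= / sqrt (1 - k2^2 * y) * / sqrt (1 - k1^2 * x).
Proof.
  intros H1 H2 H3 H4. pose proof (pow2_ge_0 k1).
  assert (0 < 1 - k2^2 * x) by nra. assert (0 < 1 - k1^2 * y) by nra.
  assert (0 < 1 - k2^2 * y) by nra. assert (0 < 1 - k1^2 * x) by nra.
  rewrite <- !Rinv_mult. rewrite <- !sqrt_mult by lra.
  apply Rinv_le_contravar. apply sqrt_lt_R0. nra. apply sqrt_le_1_alt. nra.
Qed.

Lemma sin2_mono s t : 0 <= s -> s <= t -> t <= PI/2 -> sin s ^ 2 <= sin t ^ 2.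
Proof.
  intros. pose proof PI_RGT_0.
  assert (0 <= sin s) by (apply sin_ge_0; lra).
  assert (sin s <= sin t) by (apply sin_incr_1; lra).
  nra.
Qed.

Lemma ratio k1 k2 psi: k1^2 <= k2^2 -> k2^2 < 1 -> 0 <= psi <= PI/2 ->
  ellF psi k2 * ellK k1 <= ellF psi k1 * ellK k2.
Proof.
  intros H1 H2 Hp. pose proof (pow2_ge_0 k1). assert (Hk1 : k1^2 < 1) by lra.
  unfold ellK. rewrite !ellF_wk.
  rewrite <- (Chasles_R (wk k1) 0 psi (PI/2)) by (apply wk_int; auto).
  rewrite <- (Chasles_R (wk k2) 0 psi (PI/2)) by (apply wk_int; auto).
  set (A1 := RInt (wk k1) 0 psi). set (B1 := RInt (wk k1) psi (PI/2)).
  set (A2 := RInt (wk k2) 0 psi). set (B2 := RInt (wk k2) psi (PI/2)).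
  set (c1 := wk k1 psi). set (c2 := wk k2 psi).
  assert (Hc1 : 0 < c1) by (apply wk_pos; auto).
  assert (Hc2 : 0 < c2) by (apply wk_pos; auto).
  assert (HA1 : 0 <= A1) by (apply RInt_ge_0; [lra|apply wk_int; auto|intros; left; apply wk_pos; auto]).
  assert (HB1 : 0 <= B1) by (apply RInt_ge_0; [lra|apply wk_int; auto|intros; left; apply wk_pos; auto]).
  assert (HA2 : 0 <= A2) by (apply RInt_ge_0; [lra|apply wk_int; auto|intros; left; apply wk_pos; auto]).
  assert (HB2 : 0 <= B2) by (apply RInt_ge_0; [lra|apply wk_int; auto|intros; left; apply wk_pos; auto]).
  assert (HA : c1 * A2 <= c2 * A1).
  { unfold A1, A2. rewrite <- !RInt_scal_R by (apply wk_int; auto).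
    apply RInt_le. lra.
    apply ex_RInt_scal_R. apply wk_int; auto. apply ex_RInt_scal_R. apply wk_int; auto.
    intros t Ht. unfold c1, c2, wk.
    pose proof (ratio_pt k1 k2 (sin t ^ 2) (sin psi ^ 2) H1 H2).
    assert (0 <= sin t ^ 2) by apply pow2_ge_0.
    assert (sin t ^ 2 <= sin psi ^ 2) by (apply sin2_mono; lra).
    pose proof (sin2_le1 psi). nra. }
  assert (HB : c2 * B1 <= c1 * B2).
  { unfold B1, B2. rewrite <- !RInt_scal_R by (apply wk_int; auto).
    apply RInt_le. lra.
    apply ex_RInt_scal_R. apply wk_int; auto. apply ex_RInt_scal_R. apply wk_int; auto.
    intros t Ht. unfold c1, c2, wk.
    pose proof (ratio_pt k1 k2 (sin psi ^ 2) (sin t ^ 2) H1 H2).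
    assert (0 <= sin psi ^ 2) by apply pow2_ge_0.
    assert (sin psi ^ 2 <= sin t ^ 2) by (apply sin2_mono; lra).
    pose proof (sin2_le1 t). nra. }
  assert (c1 * c2 * (A2 * B1) <= c1 * c2 * (A1 * B2)).
  { apply Rle_trans with (c2 * A1 * (c2 * B1)).
    replace (c1 * c2 * (A2 * B1)) with ((c1 * A2) * (c2 * B1)) by ring.
    apply Rmult_le_compat_r; nra.
    replace (c1 * c2 * (A1 * B2)) with ((c2 * A1) * (c1 * B2)) by ring.
    apply Rmult_le_compat_l; nra. }
  assert (A2 * B1 <= A1 * B2).
  { apply Rmult_le_reg_l with (c1 * c2). nra. auto. }
  nra.
Qed.

Lemma RInt_opp_R (f : R -> R) a b : ex_RInt f a b -> RInt (fun x => - f x) a b = - RInt f a b.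
Proof. intros H. exact (RInt_opp f a b H). Qed.
Lemma RInt_swap_R (f : R -> R) a b : ex_RInt f a b -> RInt f b a = - RInt f a b.
Proof. intros H. symmetry. exact (opp_RInt_swap f a b H). Qed.

Lemma compl k phi : k^2 < 1 -> 0 <= phi < PI/2 ->
  ellF phi k + ellF (PI/2 - atan (sqrt (1 - k^2) * tan phi)) k = ellK k.
Proof.
  intros Hk Hp. pose proof PI_RGT_0.
  set (kp := sqrt (1 - k^2)).
  assert (Hkp : 0 < kp) by (apply sqrt_lt_R0; lra).
  assert (Hkp2 : kp * kp = 1 - k^2) by (apply sqrt_sqrt; lra).
  set (g := fun t => PI/2 - atan (kp * (sin t / cos t))).
  set (dg := fun t => - kp / (1 - k^2 * sin t ^ 2)).
  assert (Hcos : forall x, Rmin 0 phi <= x <= Rmax 0 phi -> 0 < cos x).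
  { intros x Hx. rewrite Rmin_left in Hx by lra. rewrite Rmax_right in Hx by lra.
    apply cos_gt_0; lra. }
  assert (Hcomp := RInt_comp (wk k) g dg 0 phi).
  assert (E1 : RInt (fun y => scal (dg y) (wk k (g y))) 0 phi = RInt (fun y => - wk k y) 0 phi).
  { apply RInt_ext. intros x Hx.
    assert (Hc : 0 < cos x) by (apply Hcos; lra).
    pose proof (sin2 x) as Hs2. pose proof (cos2 x) as Hc2. unfold Rsqr in Hs2, Hc2.
    assert (HD : 0 < 1 - k^2 * sin x ^ 2) by (apply wk_den_pos; auto).
    unfold scal; simpl; unfold mult; simpl. unfold dg, g, wk.
    rewrite sin_shift, cos_atan.
    set (u := kp * (sin x / cos x)).
    set (D := 1 - k^2 * sin x ^ 2). assert (HD' : 0 < D) by exact HD.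
    assert (Hu : 1 + u² = D / (cos x)^2).
    { unfold u, D, Rsqr. field_simplify_eq; [|lra].
      replace (kp^2) with (1-k^2) by (rewrite <- Hkp2; ring).
      replace (cos x ^2) with (1 - sin x^2) by (simpl; lra). ring. }
    assert (Hsq : (1 / sqrt (1 + u²)) ^ 2 = cos x ^ 2 / D).
    { assert (Hq0 : 0 < sqrt (1 + u²)) by (apply sqrt_lt_R0; pose proof (Rle_0_sqr u); lra).
      assert (Hq : sqrt (1 + u²) * sqrt (1 + u²) = 1 + u²) by (apply sqrt_sqrt; pose proof (Rle_0_sqr u); lra).
      replace ((1 / sqrt (1 + u²))^2) with (1 / (sqrt (1 + u²) * sqrt (1 + u²))) by (field; lra).
      rewrite Hq, Hu. field. split; intro; lra. }
    rewrite Hsq.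
    replace (1 - k ^ 2 * (cos x ^ 2 / D)) with ((kp * kp) / D).
    2:{ rewrite Hkp2. replace (cos x ^ 2) with (1 - sin x ^2) by (simpl; lra).
        assert (EqD: 1 - k^2 * ((1 - sin x^2)/D) = (D - k^2 * (1 - sin x^2))/D) by (field; intro; lra).
        rewrite EqD. f_equal. unfold D. ring. }
    assert (HsD : 0 < sqrt D) by (apply sqrt_lt_R0; lra).
    assert (HsD2 : sqrt D * sqrt D = D) by (apply sqrt_sqrt; lra).
    rewrite sqrt_div_alt by lra. rewrite sqrt_square by lra.
    replace D with (sqrt D * sqrt D) at 1 by exact HsD2. field. split; intro; lra. }
  assert (Hyp1 : forall x, Rmin 0 phi <= x <= Rmax 0 phi -> continuous (wk k) (g x)).
  { intros x Hx. apply wk_cont; auto. }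
  assert (Hyp2 : forall x, Rmin 0 phi <= x <= Rmax 0 phi -> is_derive g x (dg x) /\ continuous dg x).
  { intros x Hx. assert (Hc : 0 < cos x) by (apply Hcos; lra). split.
    - unfold g, dg. auto_derive. lra.
      pose proof (sin2 x) as Hs2. pose proof (cos2 x) as Hc2. unfold Rsqr in Hs2, Hc2.
      assert (HD : 0 < 1 - k^2 * sin x ^ 2) by (apply wk_den_pos; auto).
      replace (1 - k^2 * sin x^2) with (cos x^2 + kp*kp*sin x^2) by (rewrite Hkp2; simpl; nra).
      match goal with |- ?A = ?B => change (@eq R A B) end.
      field_simplify.
      + replace (- kp * cos x ^ 2 - kp * sin x ^ 2) with (- kp) by (simpl; nra). reflexivity.
      + pose proof (pow2_ge_0 (sin x)). assert (0 < cos x ^ 2) by (simpl; nra). intro. nra.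
      + split. intro; lra. intro. nra.
    - apply (ex_derive_continuous (V:=R_NormedModule)). unfold dg.
      assert (HD : 0 < 1 - k^2 * sin x ^ 2) by (apply wk_den_pos; auto).
      auto_derive. lra. }
  specialize (Hcomp Hyp1 Hyp2).
  assert (Hc' : RInt (fun y => - wk k y) 0 phi = RInt (wk k) (g 0) (g phi)) by (rewrite <- E1; exact Hcomp).
  clear Hcomp. rename Hc' into Hcomp.
  rewrite RInt_opp_R in Hcomp by (apply wk_int; auto).
  assert (Hg0 : g 0 = PI/2) by (unfold g; rewrite sin_0, cos_0; replace (kp * (0/1)) with 0 by field; rewrite atan_0; lra).
  rewrite Hg0 in Hcomp.
  assert (Hgp : g phi = PI/2 - atan (kp * tan phi)) by reflexivity.
  rewrite Hgp in Hcomp.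
  set (psi := PI/2 - atan (kp * tan phi)) in *.
  rewrite (RInt_swap_R (wk k) psi (PI/2)) in Hcomp by (apply wk_int; auto).
  unfold ellK. rewrite !ellF_wk.
  assert (RInt (wk k) 0 phi = RInt (wk k) psi (PI/2)) by lra.
  rewrite H0. rewrite Rplus_comm. apply Chasles_R; apply wk_int; auto.
Qed.

Lemma atan_le x y : x <= y -> atan x <= atan y.
Proof. intros [H|H]. left; apply atan_increasing; auto. subst; lra. Qed.

Lemma k_lam_sq a b l : 0 < b < a -> 0 <= l < b -> k_lam a b l ^ 2 = (a^2 - b^2) / (a^2 - l^2).
Proof.
  intros. unfold k_lam. apply pow2_sqrt. apply Rdiv_le_0_compat; nra.
Qed.

Lemma k_lam_lt1 a b l : 0 < b < a -> 0 <= l < b -> k_lam a b l ^ 2 < 1.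
Proof.
  intros. rewrite k_lam_sq by auto. apply Rlt_div_l; nra.
Qed.

Lemma k_lam_nonneg a b l : 0 <= k_lam a b l.
Proof. apply sqrt_pos. Qed.

Definition uu a l := l / sqrt (a^2 - l^2).

Lemma uu_mono a b l1 l2 : 0 < b < a -> 0 <= l1 <= l2 -> l2 < b -> uu a l1 <= uu a l2.
Proof.
  intros. unfold uu.
  assert (0 < sqrt (a^2 - l2^2)) by (apply sqrt_lt_R0; nra).
  assert (sqrt (a^2 - l2^2) <= sqrt (a^2 - l1^2)) by (apply sqrt_le_1_alt; nra).
  unfold Rdiv. apply Rmult_le_compat; try lra.
  left; apply Rinv_0_lt_compat; lra.
  apply Rinv_le_contravar; lra.
Qed.

Lemma uu_nonneg a b l : 0 < b < a -> 0 <= l < b -> 0 <= uu a l.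
Proof. intros. unfold uu. apply Rdiv_le_0_compat. lra. apply sqrt_lt_R0; nra. Qed.

Lemma lam_compl a b l : 0 < b < a -> 0 < l < b ->
  ellF (asin (l / b)) (k_lam a b l) + ellF (PI/2 - atan (uu a l)) (k_lam a b l) = ellK (k_lam a b l).
Proof.
  intros Hab Hl.
  set (k := k_lam a b l).
  assert (Hk : k^2 < 1) by (apply k_lam_lt1; lra).
  assert (Hx : -1 < l / b < 1).
  { split. apply Rlt_trans with 0. lra. apply Rdiv_lt_0_compat; lra. apply Rlt_div_l; lra. }
  assert (Hphi : 0 <= asin (l/b) < PI/2).
  { split. rewrite asin_atan by lra. rewrite <- atan_0. apply atan_le.
    apply Rdiv_le_0_compat. left; apply Rdiv_lt_0_compat; lra. apply sqrt_lt_R0.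
    unfold Rsqr. nra. apply asin_bound_lt; lra. }
  rewrite <- (compl k (asin (l/b)) Hk Hphi). f_equal. f_equal. f_equal. f_equal.
  rewrite tan_asin by lra.
  unfold uu.
  set (A := sqrt (1 - k^2)). set (C := sqrt (1 - (l/b)²)). set (S := sqrt (a^2 - l^2)).
  assert (HA : 0 < A) by (apply sqrt_lt_R0; lra).
  assert (HC : 0 < C) by (apply sqrt_lt_R0; unfold Rsqr; nra).
  assert (HS : 0 < S) by (apply sqrt_lt_R0; nra).
  assert (AS : A * S = b * C).
  { unfold A, S, C. rewrite <- sqrt_mult by (try lra; nra).
    rewrite <- (sqrt_pow2 b) at 1 by lra.
    rewrite <- sqrt_mult by (try (pose proof (pow2_ge_0 b); lra); unfold Rsqr; nra).
    f_equal. unfold k. rewrite k_lam_sq by lra. unfold Rsqr. field. split; intro; nra. }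
  apply Rmult_eq_reg_r with (S * C); [| apply Rgt_not_eq; nra].
  replace (A * (l / b / C) * (S * C)) with ((A * S) * l / b) by (field; split; intro; lra).
  rewrite AS. field. split; intro; lra.
Qed.

Lemma omega_eq a b l : 0 < b < a -> 0 < l < b ->
  omega a b l = / 2 - ellF (PI/2 - atan (uu a l)) (k_lam a b l) / (2 * ellK (k_lam a b l)).
Proof.
  intros. unfold omega. pose proof (lam_compl a b l H H0).
  assert (PI/2 <= ellK (k_lam a b l)) by (apply ellK_ge; apply k_lam_lt1; lra).
  pose proof PI_RGT_0.
  replace (ellF (asin (l / b)) (k_lam a b l)) with (ellK (k_lam a b l) - ellF (PI/2 - atan (uu a l)) (k_lam a b l)) by lra.
  field. intro; lra.
Qed.

Lemma omega_mono a b l1 l2 : 0 < b < a -> 0 < l1 -> l1 <= l2 -> l2 < b ->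
  omega a b l1 <= omega a b l2.
Proof.
  intros Hab H1 H12 H2.
  rewrite !omega_eq by lra.
  set (k1 := k_lam a b l1). set (k2 := k_lam a b l2).
  assert (Hk1 : k1^2 < 1) by (apply k_lam_lt1; lra).
  assert (Hk2 : k2^2 < 1) by (apply k_lam_lt1; lra).
  assert (Hk12 : k1^2 <= k2^2).
  { unfold k1, k2. rewrite !k_lam_sq by lra. unfold Rdiv. apply Rmult_le_compat_l. nra.
    apply Rinv_le_contravar; nra. }
  set (p1 := PI/2 - atan (uu a l1)). set (p2 := PI/2 - atan (uu a l2)).
  pose proof (uu_mono a b l1 l2 Hab (conj (Rlt_le _ _ H1) H12) H2).
  pose proof (uu_nonneg a b l1 Hab (conj (Rlt_le _ _ H1) (Rle_lt_trans _ _ _ H12 H2))).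
  pose proof (atan_bound (uu a l2)).
  assert (Hat0 : atan 0 <= atan (uu a l1)) by (apply atan_le; lra). rewrite atan_0 in Hat0.
  assert (atan (uu a l1) <= atan (uu a l2)) by (apply atan_le; lra).
  assert (Hp : 0 <= p2 <= p1 /\ p1 <= PI/2) by (unfold p1, p2; lra).
  pose proof (ellK_ge k1 Hk1). pose proof (ellK_ge k2 Hk2). pose proof PI_RGT_0.
  assert (F1 : ellF p2 k2 <= ellF p1 k2) by (apply ellF_mono; auto; lra).
  assert (F2 : ellF p1 k2 * ellK k1 <= ellF p1 k1 * ellK k2) by (apply ratio; auto; lra).
  assert (ellF p2 k2 * ellK k1 <= ellF p1 k1 * ellK k2).
  { apply Rle_trans with (ellF p1 k2 * ellK k1); auto. apply Rmult_le_compat_r; lra. }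
  assert (ellF p2 k2 / (2 * ellK k2) <= ellF p1 k1 / (2 * ellK k1)).
  { unfold Rdiv. apply Rmult_le_reg_r with (2 * ellK k1 * (2 * ellK k2)). nra.
    replace (ellF p2 k2 * / (2 * ellK k2) * (2 * ellK k1 * (2 * ellK k2))) with (2 * (ellF p2 k2 * ellK k1)) by (field; lra).
    replace (ellF p1 k1 * / (2 * ellK k1) * (2 * ellK k1 * (2 * ellK k2))) with (2 * (ellF p1 k1 * ellK k2)) by (field; lra).
    lra. }
  lra.
Qed.

Lemma inv_add_mono X Y : 1 <= X -> X <= Y -> X + / X <= Y + / Y.
Proof.
  intros. assert (/ X - / Y = (Y - X) / (X * Y)) by (field; split; intro; lra).
  assert ((Y - X) / (X * Y) <= Y - X).
  { unfold Rdiv. rewrite <- (Rmult_1_r (Y - X)) at 2. apply Rmult_le_compat_l. lra.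
    rewrite <- Rinv_1. apply Rinv_le_contravar. lra. nra. }
  lra.
Qed.

Lemma cosh_mono s t : 0 <= s -> s <= t -> cosh s <= cosh t.
Proof.
  intros. unfold cosh. rewrite !exp_Ropp.
  assert (1 <= exp s). { rewrite <- exp_0. destruct H. left; apply exp_increasing; auto. subst; lra. }
  assert (exp s <= exp t). { destruct H0. left; apply exp_increasing; auto. subst; lra. }
  pose proof (inv_add_mono _ _ H1 H2). lra.
Qed.

Lemma cosh_ge1 t : 0 <= t -> 1 <= cosh t.
Proof. intros. rewrite <- cosh_0. apply cosh_mono; lra. Qed.

Lemma rho_facts k : 0 < k < 1 -> 0 < rho k /\ cosh (rho k) = / k.
Proof.
  intros Hk. unfold rho, arcosh.
  set (x := / k).
  assert (Hx : 1 < x). { unfold x. rewrite <- Rinv_1. apply Rinv_lt_contravar; lra. }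
  set (s := sqrt (x^2 - 1)).
  assert (Hs : 0 < s) by (apply sqrt_lt_R0; nra).
  assert (Hs2 : s * s = x^2 - 1) by (apply sqrt_sqrt; nra).
  split.
  - rewrite <- ln_1. apply ln_increasing; lra.
  - unfold cosh. rewrite exp_Ropp. rewrite exp_ln by lra.
    assert (/ (x + s) = x - s).
    { apply Rmult_eq_reg_l with (x + s); [| intro; lra]. rewrite Rinv_r by (intro; lra). simpl in Hs2. nra. }
    rewrite H. lra.
Qed.

Lemma sigma_lb kk k : 0 <= kk -> kk < k -> k < 1 ->
  rho k * (PI / (2 * ellK kk * sqrt (1 - kk^2))) <= sigma_k kk (rho k).
Proof.
  intros H0 H1 H2.
  destruct (rho_facts k ltac:(lra)) as [Hr Hc].
  set (r := rho k) in *.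
  assert (Hkk : kk^2 < 1) by nra.
  assert (Hpos : forall t, 0 <= t <= r -> 0 < 1 - kk^2 * cosh t ^ 2).
  { intros t Ht. pose proof (cosh_ge1 t ltac:(lra)). pose proof (cosh_mono t r ltac:(lra) ltac:(lra)).
    rewrite Hc in H3. assert (cosh t * k <= 1).
    { apply (Rmult_le_compat_r k) in H3; [|lra]. rewrite Rinv_l in H3 by (intro; lra). lra. }
    assert (kk * cosh t < 1) by nra. assert (0 <= kk * cosh t) by nra.
    replace (kk^2 * cosh t ^2) with ((kk * cosh t) * (kk * cosh t)) by ring. nra. }
  set (h := fun t => / sqrt (1 - kk^2 * cosh t ^2)).
  assert (Hint : ex_RInt h 0 r).
  { apply (ex_RInt_continuous (V:=R_CompleteNormedModule)). intros z Hz.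
    rewrite Rmin_left in Hz by lra. rewrite Rmax_right in Hz by lra.
    pose proof (Hpos z Hz).
    apply (ex_derive_continuous (V:=R_NormedModule)). unfold h, cosh in *.
    auto_derive. split; [lra|]. split; [|auto]. apply Rgt_not_eq, Rlt_gt, sqrt_lt_R0. lra. }
  assert (Hk0 : 0 < sqrt (1 - kk^2)) by (apply sqrt_lt_R0; lra).
  assert (HK : PI / 2 <= ellK kk) by (apply ellK_ge; auto).
  pose proof PI_RGT_0.
  assert (Hlb : r * / sqrt (1 - kk^2) <= RInt h 0 r).
  { assert (RInt (fun _ => / sqrt (1 - kk^2)) 0 r = r * / sqrt (1 - kk^2)).
    { rewrite RInt_const. unfold scal; simpl. unfold mult; simpl. lra. }
    rewrite <- H3. apply RInt_le. lra. apply ex_RInt_const. auto.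
    intros t Ht. unfold h. pose proof (Hpos t ltac:(lra)).
    pose proof (cosh_ge1 t ltac:(lra)).
    apply Rinv_le_contravar. apply sqrt_lt_R0; lra. apply sqrt_le_1_alt.
    pose proof (pow2_ge_0 kk). assert (1 <= cosh t ^ 2) by nra.
    assert (0 <= kk^2 * (cosh t ^ 2 - 1)) by (apply Rmult_le_pos; lra). nra. }
  unfold sigma_k. fold h.
  apply Rle_trans with (2 * PI / (4 * ellK kk) * (r * / sqrt (1 - kk^2))).
  - right. field. split; intro; lra.
  - apply Rmult_le_compat_l; auto. left. apply Rdiv_lt_0_compat; lra.
Qed.

Lemma div_le_cross a b c d : 0 < b -> 0 < d -> a * d <= c * b -> a / b <= c / d.
Proof.
  intros. apply Rmult_le_reg_r with (b * d). nra.
  replace (a / b * (b * d)) with (a * d) by (field; intro; lra).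
  replace (c / d * (b * d)) with (c * b) by (field; intro; lra). auto.
Qed.

Lemma scaled_pt p q s : 0 <= p -> p <= q -> q < 1 -> 0 <= s <= 1 ->
  sqrt (1 - q) * / sqrt (1 - q * s) <= sqrt (1 - p) * / sqrt (1 - p * s).
Proof.
  intros. assert (0 < 1 - q * s) by nra. assert (0 < 1 - p * s) by nra.
  rewrite <- !sqrt_inv. rewrite <- !sqrt_mult by (try lra; left; apply Rinv_0_lt_compat; lra).
  apply sqrt_le_1_alt. change ((1 - q) / (1 - q * s) <= (1 - p) / (1 - p * s)).
  apply div_le_cross; auto. nra.
Qed.

Lemma Kscaled_mono e kk : 0 <= e -> e <= kk -> kk^2 < 1 ->
  sqrt (1 - kk^2) * ellK kk <= sqrt (1 - e^2) * ellK e.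
Proof.
  intros. assert (He : e^2 < 1) by nra. pose proof PI_RGT_0.
  unfold ellK. rewrite !ellF_wk. rewrite <- !RInt_scal_R by (apply wk_int; auto).
  apply RInt_le. lra.
  apply ex_RInt_scal_R. apply wk_int; auto. apply ex_RInt_scal_R. apply wk_int; auto.
  intros t Ht. unfold wk. apply scaled_pt. nra. nra. auto.
  split. apply pow2_ge_0. apply sin2_le1.
Qed.

Lemma Kscaled_lt e : 0 < e^2 -> e^2 < 1 -> sqrt (1 - e^2) * ellK e < PI / 2.
Proof.
  intros H0 H1. pose proof PI_RGT_0.
  set (q := e^2) in *.
  set (c := sqrt (1 - q) * / sqrt (1 - q / 2)).
  assert (Hc : c < 1).
  { unfold c. assert (0 < sqrt (1 - q/2)) by (apply sqrt_lt_R0; lra).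
    assert (sqrt (1 - q) < sqrt (1 - q/2)) by (apply sqrt_lt_1_alt; lra).
    apply Rmult_lt_reg_r with (sqrt (1 - q/2)); auto.
    rewrite Rmult_assoc, Rinv_l by (intro; lra). lra. }
  unfold ellK. rewrite ellF_wk. rewrite <- RInt_scal_R by (apply wk_int; auto).
  assert (Hi : ex_RInt (fun x => sqrt (1 - q) * wk e x) 0 (PI/2)) by (apply ex_RInt_scal_R; apply wk_int; auto).
  assert (Hi1 : ex_RInt (fun x => sqrt (1 - q) * wk e x) 0 (PI/4)) by (apply ex_RInt_scal_R; apply wk_int; auto).
  assert (Hi2 : ex_RInt (fun x => sqrt (1 - q) * wk e x) (PI/4) (PI/2)) by (apply ex_RInt_scal_R; apply wk_int; auto).
  rewrite <- (Chasles_R _ 0 (PI/4) (PI/2)) by auto.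
  assert (I1 : RInt (fun x => sqrt (1 - q) * wk e x) 0 (PI/4) <= c * (PI/4)).
  { apply Rle_trans with (RInt (fun _ => c) 0 (PI/4)).
    apply RInt_le. lra. auto. apply ex_RInt_const.
    intros t Ht. unfold c, wk. fold q. apply Rmult_le_compat_l. apply sqrt_pos.
    assert (sin t <= sin (PI/4)) by (apply sin_incr_1; lra).
    assert (0 <= sin t) by (apply sin_ge_0; lra).
    rewrite sin_PI4 in H2.
    assert (Hs2 : sqrt 2 * sqrt 2 = 2) by (apply sqrt_sqrt; lra).
    assert (0 < sqrt 2) by (apply sqrt_lt_R0; lra).
    assert (sin t * sqrt 2 <= 1).
    { apply (Rmult_le_compat_r (sqrt 2)) in H2; [|lra].
      replace (1 / sqrt 2 * sqrt 2) with 1 in H2 by (field; intro; lra). lra. }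
    assert (sin t ^ 2 <= 1/2) by nra.
    apply Rinv_le_contravar. apply sqrt_lt_R0; lra. apply sqrt_le_1_alt. nra.
    right. rewrite RInt_const. unfold scal; simpl. unfold mult; simpl. lra. }
  assert (I2 : RInt (fun x => sqrt (1 - q) * wk e x) (PI/4) (PI/2) <= PI/4).
  { apply Rle_trans with (RInt (fun _ => 1) (PI/4) (PI/2)).
    apply RInt_le. lra. auto. apply ex_RInt_const.
    intros t Ht. unfold wk. fold q.
    pose proof (scaled_pt 0 q (sin t ^ 2) ltac:(lra) ltac:(lra) H1 (conj (pow2_ge_0 _) (sin2_le1 t))).
    rewrite Rmult_0_l, Rminus_0_r, sqrt_1, Rinv_1 in H2. lra.
    right. rewrite RInt_const. unfold scal; simpl. unfold mult; simpl. lra. }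
  change (plus (RInt (fun x : R => sqrt (1 - q) * wk e x) 0 (PI / 4))
    (RInt (fun x : R => sqrt (1 - q) * wk e x) (PI / 4) (PI / 2)) < PI/2).
  unfold plus; simpl. nra.
Qed.

Definition fK (kk : R) := PI / (2 * ellK kk * sqrt (1 - kk^2)).

Lemma fK_gt1 e : 0 < e^2 -> e^2 < 1 -> 1 < fK e.
Proof.
  intros. pose proof (Kscaled_lt e H H0). pose proof PI_RGT_0.
  pose proof (ellK_ge e H0). assert (0 < sqrt (1 - e^2)) by (apply sqrt_lt_R0; lra).
  unfold fK. apply Rmult_lt_reg_r with (2 * ellK e * sqrt (1 - e ^ 2)). nra.
  replace (PI / (2 * ellK e * sqrt (1 - e ^ 2)) * (2 * ellK e * sqrt (1 - e ^ 2))) with PI by (field; split; intro; lra).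
  nra.
Qed.

Lemma fK_mono e kk : 0 <= e -> e <= kk -> kk^2 < 1 -> fK e <= fK kk.
Proof.
  intros. pose proof (Kscaled_mono e kk H H0 H1). pose proof PI_RGT_0.
  assert (He : e^2 < 1) by nra.
  pose proof (ellK_ge e He). pose proof (ellK_ge kk H1).
  assert (0 < sqrt (1 - e^2)) by (apply sqrt_lt_R0; lra).
  assert (0 < sqrt (1 - kk^2)) by (apply sqrt_lt_R0; lra).
  unfold fK. unfold Rdiv. apply Rmult_le_compat_l. lra.
  apply Rinv_le_contravar. nra. nra.
Qed.

Lemma final_bound e kk k : 0 < e^2 -> 0 <= e -> e <= kk -> kk < k -> k < 1 ->
  rho k < sigma_k kk (rho k) - rho k * ((fK e - 1) / 2).
Proof.
  intros. assert (0 <= kk) by lra. assert (kk^2 < 1) by nra. assert (e^2 < 1) by nra.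
  pose proof (sigma_lb kk k H4 H2 H3).
  destruct (rho_facts k ltac:(lra)) as [Hr _].
  pose proof (fK_gt1 e H H6). pose proof (fK_mono e kk H0 H1 H5).
  fold (fK kk) in H7. nra.
Qed.

Theorem proposition9 (a b : R) (lamq : nat -> R)
  (hb : 0 < b) (hba : b < a)
  (hlam : forall q : nat, (3 <= q)%nat -> is_lambda_q a b q (lamq q)) :
  let kq := fun q : nat => k_lam a b (lamq q) in
  let e0 := ecc a b in
  exists (kappa : nat -> R) (kstar : R),
    0 < kstar /\
    (forall m : nat, (3 <= m)%nat -> kappa (S m) <= kappa m) /\
    (forall m : nat, (3 <= m)%nat -> kstar <= kappa m) /\
    (forall m j : nat, (3 <= j)%nat -> (j < m)%nat ->
       rho (kq j) < sigma_k (kq m) (rho (kq j)) - rho (kq j) * kappa m) /\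
    (forall j : nat, (3 <= j)%nat ->
       rho (kq j) < sigma_k e0 (rho (kq j)) - rho (kq j) * kstar).
Proof.
  intros kq e0.
  assert (Hab : 0 < b < a) by lra.
  assert (He2 : e0 ^ 2 = 1 - b^2 / a^2).
  { unfold e0, ecc. apply pow2_sqrt.
    assert (b^2/a^2 <= 1) by (apply Rle_div_l; nra). lra. }
  assert (He0 : 0 <= e0) by apply sqrt_pos.
  assert (He2p : 0 < e0^2).
  { rewrite He2. assert (b^2/a^2 < 1) by (apply Rlt_div_l; nra). lra. }
  assert (He21 : e0^2 < 1).
  { rewrite He2. assert (0 < b^2/a^2) by (apply Rdiv_lt_0_compat; nra). lra. }
  assert (Hl : forall q, (3 <= q)%nat -> 0 < lamq q < b) by (intros q Hq; apply (hlam q Hq)).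
  assert (Hkq : forall q, (3 <= q)%nat -> e0 < kq q /\ kq q < 1).
  { intros q Hq. pose proof (Hl q Hq).
    assert (kq q ^ 2 < 1) by (apply k_lam_lt1; lra).
    assert (0 <= kq q) by apply k_lam_nonneg.
    assert (e0^2 < kq q ^ 2).
    { unfold kq. rewrite k_lam_sq by lra. rewrite He2.
      replace (1 - b^2/a^2) with ((a^2 - b^2) / a^2) by (field; intro; nra).
      unfold Rdiv. apply Rmult_lt_compat_l. nra.
      assert (0 < a^2 - lamq q ^2) by nra. assert (0 < a^2) by nra.
      apply Rinv_lt_contravar. apply Rmult_lt_0_compat; lra. nra. }
    split; nra. }
  assert (Hmono : forall m j, (3 <= j)%nat -> (j < m)%nat -> kq m < kq j).
  { intros m j Hj Hjm.
    assert (Hm : (3 <= m)%nat) by lia.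
    pose proof (Hl m Hm). pose proof (Hl j Hj).
    assert (lamq m < lamq j).
    { destruct (Rlt_or_le (lamq m) (lamq j)) as [H'|H']; auto. exfalso.
      pose proof (omega_mono a b (lamq j) (lamq m) Hab ltac:(lra) H' ltac:(lra)).
      destruct (hlam m Hm) as [_ Om]. destruct (hlam j Hj) as [_ Oj].
      rewrite Om, Oj in H1.
      assert (INR j < INR m) by (apply lt_INR; auto).
      assert (0 < INR j) by (apply lt_0_INR; lia).
      assert (/ INR m < / INR j) by (apply Rinv_lt_contravar; nra). lra. }
    assert (kq m ^ 2 < kq j ^ 2).
    { unfold kq. rewrite !k_lam_sq by lra. unfold Rdiv. apply Rmult_lt_compat_l. nra.
      assert (0 < a^2 - lamq m ^2) by nra. assert (0 < a^2 - lamq j ^2) by nra.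
      apply Rinv_lt_contravar. apply Rmult_lt_0_compat; lra. nra. }
    assert (0 <= kq m) by apply k_lam_nonneg. assert (0 <= kq j) by apply k_lam_nonneg.
    nra. }
  exists (fun _ => (fK e0 - 1) / 2), ((fK e0 - 1) / 2).
  pose proof (fK_gt1 e0 He2p He21).
  split; [lra|]. split; [intros; lra|]. split; [intros; lra|]. split.
  - intros m j Hj Hjm. pose proof (Hkq m ltac:(lia)). pose proof (Hkq j Hj).
    pose proof (Hmono m j Hj Hjm).
    apply final_bound; auto; lra.
  - intros j Hj. pose proof (Hkq j Hj). apply final_bound; auto; lra.
Qed.
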